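(* Let $B,C\subset\mathbb{R}^p$ and $w:(B\cup C)\times(B\cup C)\to[0,\infty]$. Then for every positive $d\le p$ and every $s\ge d$, $$\underline{h}^w_{s,d}(B\cup C)^{-d/s}\le\underline{h}^w_{s,d}(B)^{-d/s}+\underline{h}^w_{s,d}(C)^{-d/s},$$ with the conventions $0^{-d/s}=\infty$ and $\infty^{-d/s}=0$.
   Context: For $E\subset\mathbb{R}^p$ and a weight $w$ defined on $E\times E$, an $N$-point configuration in $E$ is a multiset $\omega_N=\{x_1,\dots,x_N\}\subset E$; $P^w_s(E;\omega_N):=\inf_{y\in E}\sum_j w(y,x_j)|y-x_j|^{-s}$, $\mathcal{P}^w_s(E;N):=\sup_{\omega_N\subset E}P^w_s(E;\omega_N)$, $\tau_{s,d}(N)=N^{s/d}$ for $s>d$ and $\tau_{d,d}(N)=N\log N$, and $\underline{h}^w_{s,d}(E):=\liminf_{N\to\infty}\mathcal{P}^w_s(E;N)/\tau_{s,d}(N)$ (with $w$ restricted to $E\times E$). *)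

(* Defs.v *)
From HB Require Import structures.
From mathcomp Require Import all_boot all_order all_algebra.
From mathcomp Require Import all_classical all_reals all_analysis.
Set Implicit Arguments. Unset Strict Implicit. Unset Printing Implicit Defensive.
Import Order.TTheory GRing.Theory Num.Theory.
Local Open Scope classical_set_scope.
Local Open Scope ring_scope.

Section Riesz.
Variables (R : realType) (p : nat).
Notation pt := 'rV[R]_p.

Definition edist (x y : pt) : R :=
  Num.sqrt (\sum_(i < p) (x ord0 i - y ord0 i) ^+ 2).

Definition riesz (s : R) (y x : pt) : \bar R :=
  if y == x then +oo%E else (powR (edist y x) (- s))%:E.

Definition Pw (w : pt -> pt -> \bar R) (s : R) (E : set pt) (N : nat)
    (x : 'I_N -> pt) : \bar R :=
  ereal_inf [set (\sum_(j < N) (w y (x j) * riesz s y (x j)))%E | y in E].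

Definition Pcal (w : pt -> pt -> \bar R) (s : R) (E : set pt) (N : nat) : \bar R :=
  ereal_sup [set Pw w s E x | x in [set x : 'I_N -> pt | forall j, E (x j)]].

(* tau_{s,d}(N) = N^{s/d} for s > d, N log N for s = d (only used for s >= d) *)
Definition tau (s : R) (d : nat) (N : nat) : R :=
  if (d%:R < s) then powR N%:R (s / d%:R) else N%:R * ln N%:R.

Definition hlow (w : pt -> pt -> \bar R) (s : R) (d : nat) (E : set pt) : \bar R :=
  limn_einf (fun N => (Pcal w s E N * ((tau s d N)^-1)%:E)%E).

(* h |-> h^{-d/s} on [0, +oo], with 0^{-d/s} = +oo, +oo^{-d/s} = 0;
   values <= 0 (only possible for E empty, where h = -oo) are sent to +oo *)
Definition negpow (s : R) (d : nat) (h : \bar R) : \bar R :=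
  match h with
  | r%:E => if r <= 0 then +oo%E else (powR r (- (d%:R / s)))%:E
  | +oo%E => 0%E
  | -oo%E => +oo%E
  end.

End Riesz.

(* Main.v *)
Require Import Defs.
From HB Require Import structures.
From mathcomp Require Import all_boot all_order all_algebra.
From mathcomp Require Import all_classical all_reals all_analysis.
From mathcomp Require Import lra.
Import Order.TTheory GRing.Theory Num.Theory.
Local Open Scope classical_set_scope.
Local Open Scope ring_scope.

Section Liminf.
Context {R : realType}.
Local Open Scope ereal_scope.

Lemma liminf_supE (u : (\bar R)^nat) :
  limn_einf u = ereal_sup (range (einfs u)).
Proof. by rewrite limn_einf_lim; apply/cvg_lim => //; exact: cvg_einfs_sup. Qed.

Lemma liminf_lt (u : (\bar R)^nat) h : h < limn_einf u ->
  exists n0, forall k, (n0 <= k)%N -> h < u k.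
Proof.
rewrite liminf_supE => /ereal_sup_gt[_ [n _ <-]] hn.
exists n => k nk; apply: (lt_le_trans hn).
by apply: ereal_inf_lbound; exists k.
Qed.

Lemma liminf_ge (u : (\bar R)^nat) c n0 :
  (forall k, (n0 <= k)%N -> c <= u k) -> c <= limn_einf u.
Proof.
move=> H; rewrite liminf_supE; apply: (@le_trans _ _ (einfs u n0)).
  by apply: le_ereal_inf_tmp => _ [k nk <-]; exact: H.
by apply: ereal_sup_ubound; exists n0.
Qed.
End Liminf.
Section Core.
Variables (R : realType) (p : nat).
Local Notation pt := 'rV[R]_p.
Local Open Scope ereal_scope.

Lemma riesz_ge0 s (y x : pt) : 0 <= riesz s y x.
Proof. by rewrite /riesz; case: ifP => _; rewrite ?leey ?lee_fin ?powR_ge0. Qed.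

Lemma core (B C : set pt) (w : pt -> pt -> \bar R)
    (hw : forall x y, (B `|` C) x -> (B `|` C) y -> (0 <= w x y)%E)
    (s : R) (N NB NC : nat) (hN : (NB + NC <= N)%N) (x0 : pt) (Ux0 : (B `|` C) x0)
    (xB : 'I_NB -> pt) (hxB : forall j, B (xB j))
    (xC : 'I_NC -> pt) (hxC : forall j, C (xC j)) :
  Order.min (Pw w s B xB) (Pw w s C xC) <= Pcal w s (B `|` C) N.
Proof.
pose XB k := if (insub k : option 'I_NB) is Some i then xB i else x0.
pose XC k := if (insub k : option 'I_NC) is Some i then xC i else x0.
pose X k := if (k < NB)%N then XB k else if (k < NB + NC)%N then XC (k - NB)%N else x0.
have XU k : (B `|` C) (X k).
  rewrite /X /XB /XC; case: ifP => _.
    by case: insubP => [i _ _|_]; [left|].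
  case: ifP => _ //; by case: insubP => [i _ _|_]; [right|].
pose x := fun j : 'I_N => X j.
apply: (@le_trans _ _ (Pw w s (B `|` C) x)); last first.
  by apply: ereal_sup_ubound; exists x => // j; exact: XU.
apply: le_ereal_inf_tmp => _ [y Uy <-].
pose F k := w y (X k) * riesz s y (X k).
have F0 k : 0 <= F k by apply: mule_ge0; [exact: hw|exact: riesz_ge0].
have -> : \sum_(j < N) (w y (x j) * riesz s y (x j)) = \sum_(0 <= k < N) F k.
  by rewrite big_mkord.
rewrite (@big_cat_nat _ _ _ NB) //=; last by apply: leq_trans _ hN; exact: leq_addr.
rewrite (@big_cat_nat _ _ _ (NB + NC) NB) //=; last exact: leq_addr.
have S0 m n : 0 <= \sum_(m <= k < n) F k by apply: sume_ge0 => k _; exact: F0.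
case: Uy => [By|Cy].
  apply: (@le_trans _ _ (Pw w s B xB)); first by rewrite ge_min lexx.
  apply: (@le_trans _ _ (\sum_(0 <= k < NB) F k)); last first.
    by rewrite lee_paddr // adde_ge0.
  apply: ereal_inf_lbound; exists y => //.
  rewrite big_mkord; apply: eq_bigr => i _.
  by rewrite /F /X ltn_ord /XB valK.
apply: (@le_trans _ _ (Pw w s C xC)); first by rewrite ge_min lexx orbT.
apply: (@le_trans _ _ (\sum_(NB <= k < NB + NC) F k)); last first.
  by apply: (lee_paddl (S0 _ _)); apply: (lee_paddr (S0 _ _)).
apply: ereal_inf_lbound; exists y => //.
rewrite -{1}(add0n NB) big_addn addKn big_mkord; apply: eq_bigr => i _.
rewrite /F /X ltnNge leq_addl /= [(NB + NC)%N]addnC ltn_add2r ltn_ord addnK /XC valK //.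
Qed.
End Core.
Section Ratio.
Variable R : realType.

Lemma eventually_ge (b : R) : exists n0, forall N, (n0 <= N)%N -> b <= N%:R.
Proof.
exists (Num.truncn b).+1 => N hN; apply: ltW; apply: (lt_le_trans (truncnS_gt b)).
by rewrite ler_nat.
Qed.

Lemma ratio (s : R) (d : nat) (hd0 : (0 < d)%N) (hds : d%:R <= s) (th th' : R)
  (h0 : 0 < th') (h1 : th' < th) :
  exists n0, forall N, (n0 <= N)%N ->
   th' * N%:R <= (Num.truncn (th * N%:R))%:R /\
   powR th' (s / d%:R) * tau s d N <= tau s d (Num.truncn (th * N%:R)).
Proof.
have dp : (0 < d%:R :> R) by rewrite ltr0n.
set th2 := (th + th') / 2.
have th2p : 0 < th2 by rewrite /th2; lra.
have th2a : th' < th2 by rewrite /th2; lra.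
have th2b : th2 < th by rewrite /th2; lra.
set K := - (th2 * ln th2) / (th2 - th').
have [n0 Hn0] := eventually_ge ((th - th2)^-1 + th2^-1 + expR K + 1).
exists n0 => N /Hn0 HN.
have i1 : 0 < (th - th2)^-1 by rewrite invr_gt0 subr_gt0.
have i2 : 0 < th2^-1 by rewrite invr_gt0.
have i3 := expR_gt0 K.
have N1 : 1 <= N%:R :> R by lra.
have NB1 : (th - th2)^-1 <= N%:R by lra.
have NB2 : th2^-1 <= N%:R by lra.
have NB3 : expR K <= N%:R by lra.
set M := Num.truncn (th * N%:R).
have HM : th * N%:R < M%:R + 1 by rewrite natr1; exact: truncnS_gt.
have HM2 : th2 * N%:R <= M%:R.
  have : 1 <= (th - th2) * N%:R.
    by rewrite -ler_pdivrMl ?subr_gt0 // mulr1.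
  lra.
have HM3 : 1 <= th2 * N%:R by rewrite -(ler_pdivrMl _ _ th2p) mulr1.
split; first by apply: le_trans HM2; rewrite ler_pM2r ?(ltW th2a) //; exact: lt_le_trans ltr01 N1.
rewrite /tau; case: ifP => hlt.
  have e0 : 0 <= s / d%:R by apply: divr_ge0; lra.
  rewrite -powRM; [|lra|lra].
  apply: ge0_ler_powR => //; rewrite ?nnegrE; nra.
have sd : s = d%:R by apply/eqP; rewrite eq_le hds andbT leNgt hlt.
rewrite sd divff ?gt_eqF // powRr1; last lra.
have lnN : K <= ln N%:R.
  by rewrite -(expRK K) ler_ln // posrE; lra.
have lnMM : ln (th2 * N%:R) <= ln M%:R by rewrite ler_ln // posrE; lra.
have ln0 : 0 <= ln (th2 * N%:R) by apply: ln_ge0.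
have N0 : 0 < N%:R :> R by exact: lt_le_trans ltr01 N1.
rewrite lnM ?posrE // in ln0 lnMM.
have Kd : (th2 - th') * K = - (th2 * ln th2).
  by rewrite /K mulrC -mulrA mulVf ?mulr1 // gt_eqF // subr_gt0.
have : - (th2 * ln th2) <= (th2 - th') * ln N%:R.
  by rewrite -Kd ler_pM2l // subr_gt0.
nra.
Qed.
End Ratio.
Section Neg.
Variable R : realType.

Lemma tau_gt0 (s : R) d N : (0 < d)%N -> d%:R <= s -> (2 <= N)%N -> 0 < tau s d N.
Proof.
move=> hd hds hN; have N1 : 1 < N%:R :> R by rewrite ltr1n.
rewrite /tau; case: ifP => _; first by apply: powR_gt0; lra.
by apply: mulr_gt0; [lra|apply: ln_gt0].
Qed.

Lemma powR_decr (x y c : R) : 0 < x -> x <= y -> 0 <= c ->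
  (powR y c)^-1 <= (powR x c)^-1.
Proof.
move=> x0 xy c0; rewrite lef_pV2 ?posrE ?powR_gt0 //; try lra.
by apply: ge0_ler_powR => //; rewrite nnegrE; lra.
Qed.

Lemma powR_decr_lt (x y c : R) : 0 < x -> x < y -> 0 < c ->
  (powR y c)^-1 < (powR x c)^-1.
Proof.
move=> x0 xy c0; rewrite ltf_pV2 ?posrE ?powR_gt0 //; try lra.
by apply: gt0_ltr_powR => //; rewrite nnegrE; lra.
Qed.

Lemma powR_inv_cancel (r a b : R) : 0 < r -> a * b = 1 ->
  powR (powR r (- a)) b = r^-1.
Proof.
move=> r0 ab; rewrite -powRrM mulNr ab powR_inv1 //; lra.
Qed.

Lemma np (s : R) d (hd0 : (0 < d)%N) (hds : d%:R <= s) (h : \bar R) (a a' : R) :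
  negpow s d h = a%:E -> a < a' -> (((powR a' (s / d%:R))^-1)%:E < h)%E.
Proof.
have dp : (0 < d%:R :> R) by rewrite ltr0n.
have sp : 0 < s by lra.
move=> + aa; case: h => [r| |] //=; last by move=> _; rewrite ltry.
case: ifP => // /negbT; rewrite -ltNge => r0 [ea].
rewrite lte_fin -(invrK r) -(@powR_inv_cancel r (d%:R / s) (s / d%:R)) //; last first.
  by rewrite mulrA divfK ?gt_eqF // mulfV ?gt_eqF.
rewrite ea; apply: powR_decr_lt; first by rewrite -ea powR_gt0.
  by [].
by rewrite divr_gt0.
Qed.

Lemma nq (s : R) d (hd0 : (0 < d)%N) (hds : d%:R <= s) (h : \bar R) (t : R) :
  0 < t -> (((powR t^-1 (s / d%:R)))%:E <= h)%E -> (negpow s d h <= t%:E)%E.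
Proof.
have dp : (0 < d%:R :> R) by rewrite ltr0n.
have sp : 0 < s by lra.
move=> t0; case: h => [r| |] //=; last by rewrite lee_fin; lra.
rewrite lee_fin => hr.
have c0 : 0 < powR t^-1 (s / d%:R) by rewrite powR_gt0 // invr_gt0.
have r0 : 0 < r by lra.
rewrite ifF; last by apply/negbTE; rewrite -ltNge.
rewrite lee_fin powRN.
have H := powR_decr _ _ (d%:R / s) c0 hr. apply: (le_trans (H _)); first by rewrite divr_ge0 //; lra.
rewrite -powRN -powRrM mulrN (_ : s / d%:R * (d%:R / s) = 1) ?powR_inv1 ?invrK //; first by rewrite invr_ge0 ltW.
by rewrite mulrA divfK ?gt_eqF // mulfV ?gt_eqF.
Qed.
End Neg.

Section Main.
Variables (R : realType) (p : nat).
Local Notation pt := 'rV[R]_p.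

Lemma core_sup (B C : set pt) (w : pt -> pt -> \bar R)
    (hw : forall x y, (B `|` C) x -> (B `|` C) y -> (0 <= w x y)%E)
    (s : R) (N NB NC : nat) (hN : (NB + NC <= N)%N) (x0 : pt) (Ux0 : (B `|` C) x0) :
  (Order.min (Pcal w s B NB) (Pcal w s C NC) <= Pcal w s (B `|` C) N)%E.
Proof.
rewrite leNgt; apply/negP; rewrite lt_min.
move=> /andP[/ereal_sup_gt[_ [xB hxB <-] hB] /ereal_sup_gt[_ [xC hxC <-] hC]].
have := @core R p B C w hw s N NB NC hN x0 Ux0 xB hxB xC hxC.
by rewrite leNgt lt_min hB hC.
Qed.

Lemma key (B C : set pt) (w : pt -> pt -> \bar R)
    (hw : forall x y, (B `|` C) x -> (B `|` C) y -> (0 <= w x y)%E)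
    (d : nat) (s : R) (hd0 : (0 < d)%N) (hds : d%:R <= s)
    (h1 h2 thB thC thB' thC' c : R) :
  0 < h1 -> 0 < h2 ->
  (h1%:E < hlow w s d B)%E -> (h2%:E < hlow w s d C)%E ->
  0 < thB' -> thB' < thB -> 0 < thC' -> thC' < thC -> thB + thC <= 1 ->
  c <= h1 * powR thB' (s / d%:R) -> c <= h2 * powR thC' (s / d%:R) ->
  (c%:E <= hlow w s d (B `|` C))%E.
Proof.
move=> h10 h20 hB hC thB'0 thBB thC'0 thCC thBC cB cC.
have [nB0 HB] := liminf_lt _ _ hB.
have [nC0 HC] := liminf_lt _ _ hC.
have [nRB HRB] := @ratio R s d hd0 hds _ _ thB'0 thBB.
have [nRC HRC] := @ratio R s d hd0 hds _ _ thC'0 thCC.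
have [nE HE] := @eventually_ge R ((nB0 + nC0 + 2)%:R / thB' + (nB0 + nC0 + 2)%:R / thC' + 2).
apply: (@liminf_ge _ _ _ (nRB + nRC + nE)) => N hN.
have hNB : (nRB <= N)%N := leq_trans (leq_trans (leq_addr nRC nRB) (leq_addr nE _)) hN.
have hNC : (nRC <= N)%N := leq_trans (leq_trans (leq_addl nRB nRC) (leq_addr nE _)) hN.
have hNE : (nE <= N)%N := leq_trans (leq_addl _ nE) hN.
have {hNE}HN := HE N hNE.
have [rB tB] := HRB N hNB.
have [rC tC] := HRC N hNC.
set MB := Num.truncn (thB * N%:R) in rB tB.
set MC := Num.truncn (thC * N%:R) in rC tC.
set k := (nB0 + nC0 + 2)%N in HN.
have k0 : 0 <= k%:R :> R by rewrite ler0n.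
have q1 : 0 <= k%:R / thB' by rewrite divr_ge0 // ltW.
have q2 : 0 <= k%:R / thC' by rewrite divr_ge0 // ltW.
have N2 : (2 <= N)%N by rewrite -(ler_nat R); lra.
have N0 : 0 <= N%:R :> R by rewrite ler0n.
have MBk : (k <= MB)%N.
  rewrite -(ler_nat R); apply: le_trans rB.
  by rewrite -ler_pdivrMl // mulrC; lra.
have MCk : (k <= MC)%N.
  rewrite -(ler_nat R); apply: le_trans rC.
  by rewrite -ler_pdivrMl // mulrC; lra.
have MB2 : (2 <= MB)%N := leq_trans (leq_addl (nB0 + nC0) 2) MBk.
have MC2 : (2 <= MC)%N := leq_trans (leq_addl (nB0 + nC0) 2) MCk.
have MBn : (nB0 <= MB)%N := leq_trans (leq_trans (leq_addr nC0 nB0) (leq_addr 2 _)) MBk.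
have MCn : (nC0 <= MC)%N := leq_trans (leq_trans (leq_addl nB0 nC0) (leq_addr 2 _)) MCk.
have tN := @tau_gt0 R s d _ hd0 hds N2.
have tMB := @tau_gt0 R s d _ hd0 hds MB2.
have tMC := @tau_gt0 R s d _ hd0 hds MC2.
have PB := HB _ MBn; rewrite lte_pdivlMr // -EFinM in PB.
have PC := HC _ MCn; rewrite lte_pdivlMr // -EFinM in PC.
have MB0 : (0 < MB)%N := leq_trans (isT : (1 <= 2)%N) MB2.
have [_ [xB hxB _] _] := ereal_sup_gt PB.
have Ux0 : (B `|` C) (xB (Ordinal MB0)) by left; exact: hxB.
have thB0 : 0 < thB by lra.
have thC0 : 0 < thC by lra.
have eB : MB%:R <= thB * N%:R by rewrite /MB truncn_le mulr_ge0 // ltW.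
have eC : MC%:R <= thC * N%:R by rewrite /MC truncn_le mulr_ge0 // ltW.
have eN : (thB + thC) * N%:R <= N%:R by rewrite ler_piMl.
have hMN : (MB + MC <= N)%N by rewrite -(ler_nat R) natrD; lra.
have := @core_sup B C w hw s N MB MC hMN _ Ux0.
have LB : c * tau s d N <= h1 * tau s d MB.
  apply: (@le_trans _ _ (h1 * powR thB' (s / d%:R) * tau s d N)).
    by rewrite ler_wpM2r // ltW.
  by rewrite -mulrA ler_wpM2l // ltW.
have LC : c * tau s d N <= h2 * tau s d MC.
  apply: (@le_trans _ _ (h2 * powR thC' (s / d%:R) * tau s d N)).
    by rewrite ler_wpM2r // ltW.
  by rewrite -mulrA ler_wpM2l // ltW.
move=> H; rewrite lee_pdivlMr // -EFinM; apply: le_trans H.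
rewrite le_min; apply/andP; split.
  by apply: le_trans (ltW PB); rewrite lee_fin.
by apply: le_trans (ltW PC); rewrite lee_fin.
Qed.

Lemma negpow_ge0 (s : R) d h : (0 <= negpow s d h)%E.
Proof. by case: h => [r| |] //=; case: ifP => _; rewrite ?leey ?lee_fin ?powR_ge0. Qed.

Lemma negpow_neqNy (s : R) d h : negpow s d h != -oo%E.
Proof. by case: h => [r| |] //=; case: ifP. Qed.

Lemma alg (x t e : R) : 0 < x -> 0 < t ->
  (powR x e)^-1 * powR (x / t) e = powR t^-1 e.
Proof.
move=> x0 t0; rewrite powRM ?mulKf ?gt_eqF ?powR_gt0 //; first exact: ltW.
by rewrite invr_ge0 ltW.
Qed.
End Main.

Theorem lemma3 (R : realType) (p : nat) (B C : set 'rV[R]_p)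
    (w : 'rV[R]_p -> 'rV[R]_p -> \bar R)
    (hw : forall x y, (B `|` C) x -> (B `|` C) y -> (0 <= w x y)%E)
    (d : nat) (s : R) (hd0 : (0 < d)%N) (hdp : (d <= p)%N) (hds : d%:R <= s) :
  (negpow s d (hlow w s d (B `|` C))
    <= negpow s d (hlow w s d B) + negpow s d (hlow w s d C))%E.
Proof.
have dp : (0 < d%:R :> R) by rewrite ltr0n.
set hB := hlow w s d B; set hC := hlow w s d C; set hU := hlow w s d (B `|` C).
case EB: (negpow s d hB) => [a| |]; last by have := @negpow_neqNy R s d hB; rewrite EB.
  2: by rewrite addye ?negpow_neqNy // leey.
case EC: (negpow s d hC) => [b| |]; last by have := @negpow_neqNy R s d hC; rewrite EC.
  2: by rewrite addey // leey.
have a0 : 0 <= a by have := @negpow_ge0 R s d hB; rewrite EB lee_fin.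
have b0 : 0 <= b by have := @negpow_ge0 R s d hC; rewrite EC lee_fin.
apply/lee_addgt0Pr => eps eps0; rewrite -!EFinD.
set t := a + b + eps; set del := eps / 4.
have t0 : 0 < t by rewrite /t; lra.
have del0 : 0 < del by rewrite /del; lra.
have ti : 0 < t^-1 by rewrite invr_gt0.
apply: (@nq R s d hd0 hds _ t t0).
have aB : 0 < a + del by lra.
have bC : 0 < b + del by lra.
apply: (@key R p B C w hw d s hd0 hds ((powR (a + del) (s / d%:R))^-1)
   ((powR (b + del) (s / d%:R))^-1) ((a + 2 * del) / t) ((b + 2 * del) / t)
   ((a + del) / t) ((b + del) / t)).
- by rewrite invr_gt0 powR_gt0.
- by rewrite invr_gt0 powR_gt0.
- by apply: (@np R s d hd0 hds _ a) => //; lra.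
- by apply: (@np R s d hd0 hds _ b) => //; lra.
- by rewrite divr_gt0.
- by rewrite ltr_pM2r //; lra.
- by rewrite divr_gt0.
- by rewrite ltr_pM2r //; lra.
- rewrite -mulrDl (_ : a + 2 * del + (b + 2 * del) = t) ?mulfV ?gt_eqF //.
  by rewrite /t /del; lra.
- by rewrite alg.
- by rewrite alg.
Qed.
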